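(* Let $\mathcal{D}$ be an abstract system of proof notations, $s\ge2$, and let $d\in\mathcal{D}$ be $s$-bounded in $\mathcal{D}$ with height $o(d)=h\ge2$. Then for all $k\ge1$, $\mathsf E^kd$ is $2_{k-1}(2\cdot h)\cdot s$-bounded in $\mathbb{E}(\mathcal{D})$, where $\mathsf E^kd$ denotes $\mathsf E\cdots\mathsf Ed$ with $k$ occurrences of $\mathsf E$.
   Context: An abstract system of proof notations is a set $\mathcal{D}$ with functions $|\cdot|,o(\cdot)\colon\mathcal{D}\to\mathbb{N}\setminus\{0\}$ (size and height) and a relation $\to\subseteq\mathcal{D}\times\mathcal{D}$ such that $d\to d'$ implies $o(d')<o(d)$. The cut-elimination closure $\mathbb{E}(\mathcal{D})$ is the abstract system of formal terms inductively generated by: every $d\in\mathcal{D}$ is in $\mathbb{E}(\mathcal{D})$ (with size and height inherited); if $d,e\in\mathbb{E}(\mathcal{D})$ then $\mathsf{I}d,\ \mathsf{R}de,\ \mathsf{E}d\in\mathbb{E}(\mathcal{D})$ ($\mathsf I,\mathsf R,\mathsf E$ new symbols), with $|\mathsf Id|=|d|+1$, $|\mathsf Rde|=|d|+|e|+1$, $|\mathsf Ed|=|d|+1$, $o(\mathsf Id)=o(d)$, $o(\mathsf Rde)=o(d)+o(e)$, $o(\mathsf Ed)=2^{o(d)}-1$. The relation $\to$ on $\mathbb{E}(\mathcal{D})$ is inductively generated by: $d\to d'$ in $\mathcal{D}$ implies $d\to d'$; $d\to d'$ implies $\mathsf Id\to\mathsf Id'$; $e\to e'$ implies $\mathsf Rde\to\mathsf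 Rde'$; $d\to d'$ implies $\mathsf Ed\to\mathsf Ed'$; $\mathsf Rde\to\mathsf Id$ always; and $d\to d'$ together with $d\to d''$ implies $\mathsf Ed\to\mathsf R(\mathsf Ed')(\mathsf Ed'')$. For an abstract system $\mathcal{X}$ (here $\mathcal{D}$ or $\mathbb{E}(\mathcal{D})$) and $x\in\mathcal{X}$, $x$ is called $t$-bounded in $\mathcal{X}$ if every $x'\in\mathcal{X}$ with $x\to^\ast x'$ (reflexive transitive closure of the relation $\to$ of $\mathcal{X}$) satisfies $|x'|\le t$. Iterated exponentiation: $2_0(x)=x$, $2_{n+1}(x)=2^{2_n(x)}$. *)

(* Defs.v *)
From Stdlib Require Import Arith Relations.

Record APN := {
  carrier :> Type;
  size : carrier -> nat;
  height : carrier -> nat;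
  size_pos : forall d, 0 < size d;
  height_pos : forall d, 0 < height d;
  step : carrier -> carrier -> Prop;
  step_height : forall d d', step d d' -> height d' < height d
}.

Inductive Eterm (D : APN) : Type :=
| Ebase : carrier D -> Eterm D
| EI : Eterm D -> Eterm D
| ER : Eterm D -> Eterm D -> Eterm D
| EE : Eterm D -> Eterm D.

Arguments Ebase {D} _.
Arguments EI {D} _.
Arguments ER {D} _ _.
Arguments EE {D} _.

Fixpoint Esize {D : APN} (t : Eterm D) : nat :=
  match t with
  | Ebase d => size D d
  | EI d => Esize d + 1
  | ER d e => Esize d + Esize e + 1
  | EE d => Esize d + 1
  end.

Fixpoint Eheight {D : APN} (t : Eterm D) : nat :=
  match t with
  | Ebase d => height D d
  | EI d => Eheight d
  | ER d e => Eheight d + Eheight e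
  | EE d => 2 ^ Eheight d - 1
  end.

Inductive Estep {D : APN} : Eterm D -> Eterm D -> Prop :=
| Estep_base : forall d d', step D d d' -> Estep (Ebase d) (Ebase d')
| Estep_I : forall d d', Estep d d' -> Estep (EI d) (EI d')
| Estep_R : forall d e e', Estep e e' -> Estep (ER d e) (ER d e')
| Estep_E : forall d d', Estep d d' -> Estep (EE d) (EE d')
| Estep_RI : forall d e, Estep (ER d e) (EI d)
| Estep_ER : forall d d' d'', Estep d d' -> Estep d d'' ->
    Estep (EE d) (ER (EE d') (EE d'')).

Definition bounded_in_D (D : APN) (t : nat) (x : carrier D) : Prop :=
  forall x', clos_refl_trans _ (step D) x x' -> size D x' <= t.

Definition bounded_in_E (D : APN) (t : nat) (x : Eterm D) : Prop :=
  forall x', clos_refl_trans _ (@Estep D) x x' -> Esize x' <= t.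

Definition Eiter {D : APN} (k : nat) (x : Eterm D) : Eterm D :=
  Nat.iter k (@EE D) x.

Fixpoint tower (n x : nat) : nat :=
  match n with
  | 0 => x
  | S n => 2 ^ tower n x
  end.

(* Main.v *)
Require Import Defs.
From Stdlib Require Import Arith Relations Lia.

Section S.
Variable D : APN.
Notation crt := (clos_refl_trans _ (@Estep D)).

Lemma Eheight_pos : forall y : Eterm D, 1 <= Eheight y.
Proof.
  induction y; simpl.
  - apply height_pos.
  - lia.
  - lia.
  - assert (2^1 <= 2 ^ Eheight y) by (apply Nat.pow_le_mono_r; lia). simpl in H. lia.
Qed.

Lemma Estep_height : forall y y' : Eterm D, Estep y y' -> Eheight y' < Eheight y.
Proof.
  intros y y' H; induction H; simpl.
  - apply step_height; auto.
  - lia.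
  - lia.
  - assert (2 ^ Eheight d' < 2 ^ Eheight d) by (apply Nat.pow_lt_mono_r; lia).
    pose proof (Eheight_pos d'). assert (2^0 <= 2 ^ Eheight d') by (apply Nat.pow_le_mono_r; lia).
    simpl in *; lia.
  - pose proof (Eheight_pos e); lia.
  - destruct (Eheight d) as [|p] eqn:Ed; [lia|].
    assert (2 ^ Eheight d' <= 2 ^ p) by (apply Nat.pow_le_mono_r; lia).
    assert (2 ^ Eheight d'' <= 2 ^ p) by (apply Nat.pow_le_mono_r; lia).
    assert (2^0 <= 2 ^ p) by (apply Nat.pow_le_mono_r; lia).
    rewrite Nat.pow_succ_r'. simpl in *. lia.
Qed.

Inductive Good (x : Eterm D) : nat -> Eterm D -> Prop :=
| G1 m x' : crt x x' -> Eheight x' <= m -> Good x m (EE x')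
| G2 m m' a z : crt x a -> Eheight a <= m' -> Good x m' z -> m' < m -> Good x m (ER (EE a) z)
| G3 m m' z : Good x m' z -> m' < m -> Good x m (EI z).

Lemma Good_step x : forall m y, Good x m y -> forall y', Estep y y' -> Good x m y'.
Proof.
  intros m y G; induction G; intros y' St; inversion St; subst.
  - apply G1. eapply rt_trans; [eassumption| apply rt_step; auto].
    match goal with A : Estep _ _ |- _ => pose proof (Estep_height _ _ A) end; lia.
  - match goal with A : Estep x' d' , B : Estep x' d'' |- _ => pose proof (Estep_height _ _ A); pose proof (Estep_height _ _ B) end.
    apply G2 with (m' := max (Eheight d') (Eheight d'')).
    + eapply rt_trans; [eassumption| apply rt_step; auto].
    + lia.
    + apply G1. eapply rt_trans; [eassumption| apply rt_step; auto]. lia.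
    + lia.
  - eapply G2; eauto.
  - eapply G3; [apply G1|]; eauto.
  - eapply G3; eauto.
Qed.

Lemma Good_crt x : forall y y', crt y y' -> forall m, Good x m y -> Good x m y'.
Proof.
  intros y y' H; induction H; intros; eauto using Good_step.
Qed.

Lemma Good_size x t : (forall x', crt x x' -> Esize x' <= t) ->
  forall m y, Good x m y -> Esize y + 1 <= m * (t + 2).
Proof.
  intros Hb m y G; induction G; simpl.
  - specialize (Hb _ H). pose proof (Eheight_pos x'). nia.
  - specialize (Hb _ H). nia.
  - nia.
Qed.

Lemma E_bound x t : (forall x', crt x x' -> Esize x' <= t) ->
  forall y, crt (EE x) y -> Esize y + 1 <= Eheight x * (t + 2).
Proof.
  intros Hb y Hy. apply (Good_size x t Hb).
  eapply Good_crt; [eassumption|]. apply G1; [apply rt_refl|lia].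
Qed.

Lemma base_reducts : forall y z, crt y z -> forall d, y = Ebase d ->
  exists d', z = Ebase d' /\ clos_refl_trans _ (step D) d d'.
Proof.
  intros y z H; induction H; intros; subst.
  - inversion H; subst. eexists; split; [reflexivity| apply rt_step; auto].
  - eexists; split; [reflexivity| apply rt_refl].
  - destruct (IHclos_refl_trans1 _ eq_refl) as [d1 [-> H1]].
    destruct (IHclos_refl_trans2 _ eq_refl) as [d2 [-> H2]].
    eexists; split; [reflexivity| eapply rt_trans; eauto].
Qed.

Lemma pow_ge_double : forall c, 1 <= c -> 2 * c <= 2 ^ c.
Proof.
  induction c; intros; [lia|]. destruct c; [simpl; lia|].
  rewrite Nat.pow_succ_r'. specialize (IHc ltac:(lia)). lia.
Qed.

End S.

Theorem mainTheorem9 (D : APN) (s : nat) (d : carrier D) :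
  2 <= s ->
  bounded_in_D D s d ->
  2 <= height D d ->
  forall k : nat, 1 <= k ->
    bounded_in_E D (tower (k - 1) (2 * height D d) * s) (Eiter k (Ebase d)).
Proof.
  intros Hs Hd Hh k Hk.
  assert (Main : forall k, exists c, 1 <= c /\ tower k (2 * height D d) = 2 * c /\
            Eheight (Eiter (S k) (Ebase d)) + 1 <= 2 ^ c /\
            bounded_in_E D (2 * c * s) (Eiter (S k) (Ebase d))).
  { induction k0 as [|n IH].
    - exists (height D d). simpl. split; [lia|]. split; [lia|].
      assert (2^0 <= 2 ^ height D d) by (apply Nat.pow_le_mono_r; lia). simpl in H.
      split; [lia|].
      intros y Hy.
      assert (Hb : forall x', clos_refl_trans _ (@Estep D) (Ebase d) x' -> Esize x' <= s).
      { intros x' Hx. destruct (base_reducts D _ _ Hx d eq_refl) as [d' [-> Hd']].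
        simpl. apply Hd; auto. }
      pose proof (E_bound D _ _ Hb y Hy). simpl in H0. nia.
    - destruct IH as [c [Hc1 [Ht [He Hb]]]].
      exists (2 ^ (2 * c - 1)).
      assert (Pc : 2 * c <= 2 ^ c) by (apply pow_ge_double; lia).
      assert (Q : 2 ^ (2 * c) = 2 * 2 ^ (2 * c - 1)).
      { replace (2 * c) with (S (2 * c - 1)) at 1 by lia. apply Nat.pow_succ_r'. }
      assert (Q2 : 2 ^ (2 * c) = 2 ^ c * 2 ^ c).
      { rewrite <- Nat.pow_add_r. f_equal. lia. }
      assert (H0p : 2^0 <= 2 ^ (2 * c - 1)) by (apply Nat.pow_le_mono_r; lia). rewrite Nat.pow_0_r in H0p.
      split; [lia|]. split; [change (tower (S n) (2 * height D d)) with (2 ^ tower n (2 * height D d)); rewrite Ht; exact Q|].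
      set (x := Eiter (S n) (Ebase d)) in *.
      change (Eiter (S (S n)) (Ebase d)) with (EE x).
      split.
      + simpl. pose proof (Eheight_pos D x).
        assert (2^1 <= 2 ^ Eheight x) by (apply Nat.pow_le_mono_r; lia).
        assert (2 ^ Eheight x <= 2 ^ (2 ^ (2 * c - 1))).
        { apply Nat.pow_le_mono_r; [lia|].
          assert (2 ^ c <= 2 ^ (2 * c - 1)) by (apply Nat.pow_le_mono_r; lia). lia. }
        simpl in *. lia.
      + intros y Hy. pose proof (E_bound D x (2 * c * s) Hb y Hy).
        set (P := 2 ^ c) in *. set (H' := Eheight x) in *.
        assert (H' * (2 * c * s + 2) <= H' * ((P + 1) * s)) by (apply Nat.mul_le_mono_l; nia).
        assert (H' * ((P + 1) * s) <= (P - 1) * ((P + 1) * s)) by (apply Nat.mul_le_mono_r; lia).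
        assert ((P - 1) * ((P + 1) * s) <= P * P * s).
        { destruct P; [lia|]. replace (S P - 1) with P by lia. nia. }
        nia. }
  destruct k as [|k]; [lia|]. destruct (Main k) as [c [_ [Ht [_ Hb]]]].
  replace (S k - 1) with k by lia. rewrite Ht. exact Hb.
Qed.
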